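(* Let $(J,S)$ be an irreducible and ergodic homogeneous $d$-dimensional multi-time Markov renewal chain, and let $\nu$ be the stationary distribution of the embedded chain $J$. Then for all $j\in E$ and $1\le u\le d$, $$\mu^{(u,u)}_{jj}=\frac{\sum_{i=1}^s\nu_i m^{[u,u]}_i}{\nu_j}+2\,\frac{\sum_{i=1}^s\sum_{r\ne j}\nu_i p_{ir}m^{[u]}_{ir}\mu^{(u)}_{rj}}{\nu_j}.$$
   Context: $E=\{1,\dots,s\}$; $\mathbb{N}^d$ has the componentwise partial order, $k<l$ meaning $k\le l$, $k\ne l$. A homogeneous $d$-dimensional multi-time Markov renewal chain is a process $(J_n,S_n)_{n\in\mathbb{N}}$, $J_n\in E$, $S_n=(S^{[1]}_n,\dots,S^{[d]}_n)\in\mathbb{N}^d$, $S_0=0_d$, $S_n<S_{n+1}$, with a.s. $\mathbb{P}(J_{n+1}=j,S_{n+1}-S_n=k\mid J_{0:n},S_{0:n})=q_{J_nj}(k)$, $q_{ij}(k)=\mathbb{P}(J_{n+1}=j,S_{n+1}-S_n=k\mid J_n=i)$ independent of $n$. $X_{n+1}=S_{n+1}-S_n$, coordinates $X^{[u]}_{n+1}$. $p_{ij}=\sum_kq_{ij}(k)$. $\mathbb{E}_i$: expectation given $J_0=i$. $m^{[u,u]}_i=\mathbb{E}[(X^{[u]}_{n+1})^2\mid J_n=i]$, $m^{[u]}_{ir}=\mathbb{E}[X^{[u]}_{n+1}\mid J_n=i,J_{n+1}=r]$. With $m_j=\min\{l\ge1:J_l=j\}$ and $T^{[u]}_j=S^{[u]}_{m_j}$: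 $\mu^{(u)}_{ij}=\mathbb{E}_i[T^{[u]}_j]$, $\mu^{(u,u)}_{ij}=\mathbb{E}_i[(T^{[u]}_j)^2]$. Irreducible: $J$ irreducible. Ergodic: for each $u$, the marginal one-dimensional-time Markov renewal chain $(J,S^{[u]})$ (kernel $q^{[u]}_{ij}(k)=\sum_{k_{1:d}:k_u=k}q_{ij}(k_{1:d})$) is positive recurrent (all return times $T^{[u]}_j$ a.s. finite with finite mean) and aperiodic (each return time distribution has period $1$). *)

(* Defs.v *)
From HB Require Import structures.
From mathcomp Require Import all_boot all_order all_algebra.
From mathcomp Require Import all_classical all_reals all_analysis.
Set Implicit Arguments. Unset Strict Implicit. Unset Printing Implicit Defensive.
Import Order.TTheory GRing.Theory Num.Theory.
Local Open Scope classical_set_scope.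
Local Open Scope ring_scope.

(* State space E = {1,..,s} is rendered as 'I_s (0-based).  Times in N^d are
   finite functions 'I_d -> nat; the coordinate u (1 <= u <= d) is u : 'I_d.
   A homogeneous d-dimensional multi-time Markov renewal chain is given by its
   semi-Markov kernel q i j k = P(J_{n+1}=j, X_{n+1}=k | J_n=i); its law
   (for each initial state) is entirely determined by q. *)
Definition time (d : nat) := {ffun 'I_d -> nat}.

Section MRC.
Context {R : realType} {s d : nat}.
Variable q : 'I_s -> 'I_s -> time d -> R.
Local Open Scope ereal_scope.

(* q is a semi-Markov kernel with strictly increasing jumps (S_n < S_{n+1}) *)
Definition is_kernel :=
  (forall i j k, (0 <= q i j k)%R) /\
  (forall i j, q i j [ffun=> 0%N] = 0%R) /\
  (forall i, \sum_(j < s) (\esum_(k in [set: time d]) (q i j k)%:E) = 1).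

Definition ptrans (i j : 'I_s) : \bar R := \esum_(k in [set: time d]) (q i j k)%:E.

Fixpoint pn (n : nat) (i j : 'I_s) : \bar R :=
  if n is n'.+1 then \sum_(r < s) ptrans i r * pn n' r j
  else (i == j)%:R%:E.

Definition irreducible := forall i j : 'I_s, exists n, 0 < pn n i j.

Definition stationary (nu : 'I_s -> R) :=
  (forall i, (0 <= nu i)%R) /\ (\sum_(i < s) nu i)%R = 1%R /\
  (forall j, \sum_(i < s) (nu i)%:E * ptrans i j = (nu j)%:E).

Definition qmarg (u : 'I_d) (i j : 'I_s) (t : nat) : \bar R :=
  \esum_(k in [set k : time d | k u = t]) (q i j k)%:E.

(* fpass u n i j t = P_i(m_j = n+1, S^{[u]}_{n+1} = t) *)
Fixpoint fpass (u : 'I_d) (n : nat) (i j : 'I_s) (t : nat) : \bar R :=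
  if n is n'.+1 then
    \sum_(r < s | r != j) \sum_(t' < t.+1) qmarg u i r t' * fpass u n' r j (t - t')
  else qmarg u i j t.

(* P_i(T^{[u]}_j = t), for t in N *)
Definition retdist (u : 'I_d) (i j : 'I_s) (t : nat) : \bar R :=
  \sum_(n <oo) fpass u n i j t.

Definition retfin (u : 'I_d) (i j : 'I_s) : \bar R := \sum_(t <oo) retdist u i j t.

(* mu^{(u)}_{ij} = E_i[T^{[u]}_j]  (= +oo if T^{[u]}_j = oo with positive probability) *)
Definition mu1 (u : 'I_d) (i j : 'I_s) : \bar R :=
  if retfin u i j == 1 then \sum_(t <oo) (t%:R)%:E * retdist u i j t else +oo.

Definition mu2 (u : 'I_d) (i j : 'I_s) : \bar R :=
  if retfin u i j == 1 then \sum_(t <oo) ((t ^ 2)%N%:R)%:E * retdist u i j t else +oo.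

Definition aperiodic_ret (u : 'I_d) (j : 'I_s) :=
  forall p : nat, (forall t : nat, 0 < retdist u j j t -> (p %| t)%N) -> p = 1%N.

(* ergodic: every marginal chain (J, S^{[u]}) positive recurrent and aperiodic *)
Definition ergodic :=
  forall (u : 'I_d) (j : 'I_s),
    retfin u j j = 1 /\ mu1 u j j < +oo /\ aperiodic_ret u j.

Definition m2 (u : 'I_d) (i : 'I_s) : \bar R :=
  \sum_(j < s) \esum_(k in [set: time d]) (q i j k)%:E * (((k u) ^ 2)%N%:R)%:E.

(* m^{[u]}_{ir} = E[X^{[u]}_{n+1} | J_n = i, J_{n+1} = r]  (set to 0 when p_ir = 0,
   where it is undefined; it only appears multiplied by p_ir) *)
Definition m1 (u : 'I_d) (i r : 'I_s) : \bar R :=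
  if ptrans i r == 0 then 0
  else (\esum_(k in [set: time d]) (q i r k)%:E * ((k u)%:R)%:E) * (fine (ptrans i r))^-1%:E.

End MRC.

(* Main.v *)
Require Import Defs.
From HB Require Import structures.
From mathcomp Require Import all_boot all_order all_algebra.
From mathcomp Require Import all_classical all_reals all_analysis.
From mathcomp Require Import ring lra.
Import Order.TTheory GRing.Theory Num.Theory.
Local Open Scope classical_set_scope.
Local Open Scope ring_scope.
Local Open Scope ereal_scope.
Section generic.
Context {R : realType}.
Implicit Types (f g : nat -> \bar R).

Lemma term_le_series f t : (forall n, 0 <= f n) -> f t <= \sum_(i <oo) f i.
Proof.
move=> f0; apply: le_trans (nneseries_lim_ge (m := 0%N) t.+1 (fun n _ _ => f0 n)).
by rewrite big_nat_recr //= leeDr // sume_ge0.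
Qed.

Lemma nneseriesZe f (c : \bar R) : 0 <= c -> (forall t, 0 <= f t) ->
  \sum_(t <oo) (c * f t) = c * \sum_(t <oo) f t.
Proof.
move: c => [r| |] c0 f0 //.
- by rewrite nneseriesZl.
- case: (pselect (exists t, 0 < f t)) => [[t ft]|nf].
  + rewrite gt0_mulye; last by apply: (lt_le_trans ft); apply: term_le_series.
    apply: (nneseries_pinfty _ _ (k:=t)) => //; first by move=> n _; rewrite mule_ge0.
    by rewrite gt0_mulye.
  + have fz t : f t = 0.
      by apply/eqP; rewrite eq_le f0 andbT leNgt; apply/negP => h; apply: nf; exists t.
    rewrite !eseries0 ?mule0 // => i _ _; by rewrite fz mule0.
Qed.

Lemma nneseriesZer f (c : \bar R) : 0 <= c -> (forall t, 0 <= f t) ->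
  \sum_(t <oo) (f t * c) = (\sum_(t <oo) f t) * c.
Proof.
move=> c0 f0; rewrite [RHS]muleC -nneseriesZe //.
by apply: eq_eseriesr => t _; rewrite muleC.
Qed.

Lemma fin_series g n : (forall t, 0 <= g t) ->
  \sum_(t < n) g t = \sum_(t <oo) (if (t < n)%N then g t else 0).
Proof.
move=> g0; rewrite (nneseries_split 0 n); last by move=> k _; case: ifP.
rewrite eseries0 ?adde0; last by move=> i; rewrite add0n leqNgt => /negbTE ->.
by rewrite add0n big_mkord; apply: eq_bigr => i _; rewrite ltn_ord.
Qed.

Lemma conv_double (G : nat -> nat -> \bar R) : (forall a b, 0 <= G a b) ->
  \sum_(t <oo) \sum_(t' < t.+1) G t' (t - t')%N =
  \sum_(t' <oo) \sum_(t'' <oo) G t' t''.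
Proof.
move=> G0.
transitivity (\sum_(t <oo) \sum_(t' <oo) (if (t' < t.+1)%N then G t' (t - t')%N else 0)).
  by apply: eq_eseriesr => t _; apply: (fin_series (fun t0 => G t0 (t - t0)%N)).
rewrite nneseries_interchange; last by move=> a b; case: ifP.
apply: eq_eseriesr => t' _.
pose h := fun t => if (t' < t.+1)%N then G t' (t - t')%N else 0.
have h0 : forall t, 0 <= h t by move=> t; rewrite /h; case: ifP.
rewrite -/(\sum_(t <oo) h t).
rewrite (nneseries_split 0 t'); last by move=> k _; exact: h0.
rewrite add0n big_mkord big1 ?add0e; last first.
  by move=> i _; rewrite /h ltnS leqNgt ltn_ord.
rewrite -nneseries_addn //.
apply: eq_eseriesr => i _; rewrite /h ltnS leq_addl addnK //.
Qed.
End generic.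
Section moments.
Context {R : realType}.
Implicit Types (a b x y : nat -> \bar R).

Definition mom (k : nat) a := \sum_(t <oo) (((t ^ k)%N)%:R%:E : \bar R) * a t.
Definition conv a b (t : nat) := \sum_(t' < t.+1) a t' * b (t - t')%N.

Lemma wk_ge0 k n : 0 <= (((n ^ k)%N)%:R%:E : \bar R).
Proof. by rewrite lee_fin. Qed.

Lemma conv_ge0 a b t : (forall n, 0 <= a n) -> (forall n, 0 <= b n) -> 0 <= conv a b t.
Proof. by move=> a0 b0; rewrite /conv sume_ge0 // => i _; rewrite mule_ge0. Qed.

Lemma mom_ge0 k a : (forall n, 0 <= a n) -> 0 <= mom k a.
Proof. by move=> a0; apply: nneseries_ge0 => n _ _; rewrite mule_ge0 // lee_fin. Qed.

Lemma mom0E a : mom 0 a = \sum_(t <oo) a t.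
Proof. by apply: eq_eseriesr => t _; rewrite expn0 mul1e. Qed.

Lemma double_prod x y : (forall n, 0 <= x n) -> (forall n, 0 <= y n) ->
  \sum_(t' <oo) \sum_(t'' <oo) (x t' * y t'') = (\sum_(t <oo) x t) * (\sum_(t <oo) y t).
Proof.
move=> x0 y0.
rewrite (eq_eseriesr (g := fun t' => x t' * \sum_(t <oo) y t)); last first.
  by move=> t' _; rewrite nneseriesZe.
by rewrite nneseriesZer // nneseries_ge0.
Qed.

Lemma mom_conv_gen (w : nat -> \bar R) a b : (forall n, 0 <= w n) ->
  (forall n, 0 <= a n) -> (forall n, 0 <= b n) ->
  \sum_(t <oo) w t * conv a b t =
  \sum_(t' <oo) \sum_(t'' <oo) w (t' + t'')%N * (a t' * b t'').
Proof.
move=> w0 a0 b0.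
rewrite -conv_double; last by move=> m n; rewrite !mule_ge0.
apply: eq_eseriesr => t _; rewrite /conv ge0_sume_distrr; last by move=> i _; rewrite mule_ge0.
apply: eq_bigr => i _; rewrite subnKC //; exact: (ltn_ord i).
Qed.

Lemma mom0_conv a b : (forall n, 0 <= a n) -> (forall n, 0 <= b n) ->
  mom 0 (conv a b) = mom 0 a * mom 0 b.
Proof.
move=> a0 b0; rewrite /mom (mom_conv_gen _ _ _ (fun n => wk_ge0 _ n)) //.
rewrite -double_prod; try by move=> n; rewrite mule_ge0 // lee_fin.
apply: eq_eseriesr => t' _; apply: eq_eseriesr => t'' _.
by rewrite !expn0 !mul1e.
Qed.

Lemma mom1_conv a b : (forall n, 0 <= a n) -> (forall n, 0 <= b n) ->
  mom 1 (conv a b) = mom 1 a * mom 0 b + mom 0 a * mom 1 b.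
Proof.
move=> a0 b0; rewrite /mom (mom_conv_gen _ _ _ (fun n => wk_ge0 _ n)) //.
rewrite -!double_prod; try by move=> n; rewrite mule_ge0.
rewrite -nneseriesD; last 2 first.
  by move=> i _ _; apply: nneseries_ge0 => n _ _; rewrite !mule_ge0.
  by move=> i _ _; apply: nneseries_ge0 => n _ _; rewrite !mule_ge0.
apply: eq_eseriesr => t' _.
rewrite -nneseriesD; last 2 first.
  by move=> i _ _; rewrite !mule_ge0.
  by move=> i _ _; rewrite !mule_ge0.
apply: eq_eseriesr => t'' _.
rewrite !expn1 !expn0 natrD EFinD ge0_muleDl ?lee_fin //.
rewrite !mul1e; congr (_ + _).
- by rewrite muleA.
- by rewrite muleCA.
Qed.

Lemma nneseriesD3 (f g h : nat -> \bar R) : (forall n, 0 <= f n) -> (forall n, 0 <= g n) ->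
  (forall n, 0 <= h n) ->
  \sum_(t <oo) (f t + g t + h t) = \sum_(t <oo) f t + \sum_(t <oo) g t + \sum_(t <oo) h t.
Proof.
move=> f0 g0 h0; rewrite nneseriesD; last 2 first.
  by move=> n _ _; rewrite adde_ge0.
  by move=> n _ _.
by rewrite nneseriesD.
Qed.

Lemma mom2_conv a b : (forall n, 0 <= a n) -> (forall n, 0 <= b n) ->
  mom 2 (conv a b) = mom 2 a * mom 0 b + 2%:E * (mom 1 a * mom 1 b) + mom 0 a * mom 2 b.
Proof.
move=> a0 b0; rewrite /mom (mom_conv_gen _ _ _ (fun n => wk_ge0 _ n)) //.
have X k n : 0 <= ((n ^ k)%:R)%:E * a n by rewrite mule_ge0 // wk_ge0.
have Y k n : 0 <= ((n ^ k)%:R)%:E * b n by rewrite mule_ge0 // wk_ge0.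
rewrite -!double_prod //.
have E : forall t' t'', ((((t' + t'') ^ 2)%N)%:R)%:E * (a t' * b t'') =
   ((t' ^ 2)%:R)%:E * a t' * (((t'' ^ 0)%:R)%:E * b t'') +
   2%:E * (((t' ^ 1)%:R)%:E * a t' * (((t'' ^ 1)%:R)%:E * b t'')) +
   ((t' ^ 0)%:R)%:E * a t' * (((t'' ^ 2)%:R)%:E * b t'').
  move=> t' t''.
  rewrite sqrnD addnAC !natrD !EFinD !ge0_muleDl ?adde_ge0 ?lee_fin //.
  rewrite !expn0 !expn1 !mul1e; congr (_ + _ + _).
  - by rewrite muleA.
  - by rewrite mul0e adde0; congr (_ + _); rewrite natrM EFinM muleACA.
  - by rewrite muleCA.
under eq_eseriesr => t' _ do under eq_eseriesr => t'' _ do rewrite E.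
have Z k l t' t'' : 0 <= ((t' ^ k)%:R)%:E * a t' * (((t'' ^ l)%:R)%:E * b t'').
  by rewrite mule_ge0.
under eq_eseriesr => t' _.
  rewrite nneseriesD3; last 3 first.
  - by move=> n; apply: Z.
  - by move=> n; rewrite mule_ge0 // lee_fin.
  - by move=> n; apply: Z.
  rewrite (@nneseriesZl _ (fun n => ((t' ^ 1)%:R)%:E * a t' * (((n ^ 1)%:R)%:E * b n))) //.
  over.
have S k l t' : 0 <= \sum_(t'' <oo) ((t' ^ k)%:R)%:E * a t' * (((t'' ^ l)%:R)%:E * b t'').
  by apply: nneseries_ge0 => n _ _; apply: Z.
rewrite nneseriesD3; last 3 first.
- by move=> n; apply: S.
- by move=> n; rewrite mule_ge0 // lee_fin.
- by move=> n; apply: S.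
by rewrite (@nneseriesZl _ (fun t' => \sum_(t'' <oo) ((t' ^ 1)%:R)%:E * a t' * (((t'' ^ 1)%:R)%:E * b t''))).
Qed.
End moments.
Section series_aux.
Context {R : realType}.

Lemma series_shift (f : nat -> \bar R) : (forall n, 0 <= f n) ->
  \sum_(n <oo) f n = f 0%N + \sum_(n <oo) f n.+1.
Proof.
move=> f0; rewrite nneseries_recl //; congr (_ + _).
rewrite -nneseries_addn //; apply: eq_eseriesr => n _; by rewrite addn1.
Qed.

Lemma series_sumZ (I : finType) (P : pred I) (c : I -> \bar R) (G : nat -> I -> \bar R) :
  (forall r, 0 <= c r) -> (forall n r, 0 <= G n r) ->
  \sum_(n <oo) \sum_(r | P r) (c r * G n r) = \sum_(r | P r) (c r * \sum_(n <oo) G n r).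
Proof.
move=> c0 G0; rewrite nneseries_sum; last by move=> r n _; rewrite mule_ge0.
by apply: eq_bigr => r _; rewrite nneseriesZe.
Qed.

Lemma fsum_sumZ (I : finType) (P : pred I) (c : I -> \bar R) (G : nat -> I -> \bar R) N :
  (forall r, 0 <= c r) -> (forall n r, 0 <= G n r) ->
  \sum_(0 <= n < N) \sum_(r | P r) (c r * G n r) = \sum_(r | P r) (c r * \sum_(0 <= n < N) G n r).
Proof.
move=> c0 G0; rewrite exchange_big /=; apply: eq_bigr => r _.
by rewrite ge0_sume_distrr.
Qed.

Lemma mom_sum k (I : finType) (P : pred I) (c : I -> nat -> \bar R) :
  (forall r n, 0 <= c r n) ->
  mom k (fun t => \sum_(r | P r) c r t) = \sum_(r | P r) mom k (c r).
Proof.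
move=> c0; rewrite /mom.
under eq_eseriesr => t _ do rewrite ge0_sume_distrr //.
by rewrite nneseries_sum // => r n _; rewrite mule_ge0 // wk_ge0.
Qed.
Lemma series_le_bound (f : nat -> \bar R) x : (forall n, 0 <= f n) ->
  (forall N, \sum_(0 <= n < N) f n <= x) -> \sum_(n <oo) f n <= x.
Proof.
move=> f0 hN; apply: lime_le; first by apply: is_cvg_nneseries => n _ _; exact: f0.
by apply: nearW => N; exact: hN.
Qed.

Lemma partial_le_series (f : nat -> \bar R) N : (forall n, 0 <= f n) ->
  \sum_(0 <= n < N) f n <= \sum_(n <oo) f n.
Proof. by move=> f0; apply: nneseries_lim_ge => n _ _; exact: f0. Qed.

Lemma partial_mono (f : nat -> \bar R) N : (forall n, 0 <= f n) ->
  \sum_(0 <= n < N) f n <= \sum_(0 <= n < N.+1) f n.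
Proof. by move=> f0; rewrite big_nat_recr //= leeDl. Qed.
End series_aux.
Section chain.
Context {R : realType} {s d : nat} (q : 'I_s -> 'I_s -> time d -> R) (u : 'I_d) (j : 'I_s).
Context (hq0 : forall i r k, (0 <= q i r k)%R).

Definition qm i r : nat -> \bar R := qmarg q u i r.
Definition fp n i : nat -> \bar R := fun t => fpass q u n i j t.

Lemma qm_ge0 i r t : 0 <= qm i r t.
Proof. by apply: esum_ge0 => k _; rewrite lee_fin. Qed.

Lemma fp_ge0 n i t : 0 <= fp n i t.
Proof.
elim: n i t => [|n IH] i t; first exact: qm_ge0.
rewrite /fp /=; apply: sume_ge0 => r _; apply: sume_ge0 => t' _.
by apply: mule_ge0; [exact: qm_ge0|exact: IH].
Qed.

Lemma fpS n i : fp n.+1 i = fun t => \sum_(r < s | r != j) conv (qm i r) (fp n r) t.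
Proof. by []. Qed.

Definition Q k i r := mom k (qm i r).
Definition F k n i := mom k (fp n i).
Definition Ftot k i := \sum_(n <oo) F k n i.
Definition Fp k N i := \sum_(0 <= n < N) F k n i.

Lemma Q_ge0 k i r : 0 <= Q k i r.
Proof. by apply: mom_ge0 => t; exact: qm_ge0. Qed.
Lemma F_ge0 k n i : 0 <= F k n i.
Proof. by apply: mom_ge0 => t; exact: fp_ge0. Qed.
Lemma Ftot_ge0 k i : 0 <= Ftot k i.
Proof. by apply: nneseries_ge0 => n _ _; exact: F_ge0. Qed.
Lemma Fp_ge0 k N i : 0 <= Fp k N i.
Proof. by apply: sume_ge0 => n _; exact: F_ge0. Qed.

Lemma F0S n i : F 0 n.+1 i = \sum_(r < s | r != j) Q 0 i r * F 0 n r.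
Proof.
rewrite /F fpS mom_sum; last by move=> r t; apply: conv_ge0 => m; [exact: qm_ge0|exact: fp_ge0].
by apply: eq_bigr => r _; rewrite mom0_conv // => m; [exact: qm_ge0|exact: fp_ge0].
Qed.

Lemma F1S n i : F 1 n.+1 i = \sum_(r < s | r != j) (Q 1 i r * F 0 n r + Q 0 i r * F 1 n r).
Proof.
rewrite /F fpS mom_sum; last by move=> r t; apply: conv_ge0 => m; [exact: qm_ge0|exact: fp_ge0].
by apply: eq_bigr => r _; rewrite mom1_conv // => m; [exact: qm_ge0|exact: fp_ge0].
Qed.

Lemma F2S n i : F 2 n.+1 i = \sum_(r < s | r != j)
   (Q 2 i r * F 0 n r + (2%:E * Q 1 i r) * F 1 n r + Q 0 i r * F 2 n r).
Proof.
rewrite /F fpS mom_sum; last by move=> r t; apply: conv_ge0 => m; [exact: qm_ge0|exact: fp_ge0].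
by apply: eq_bigr => r _; rewrite mom2_conv ?muleA // => m; [exact: qm_ge0|exact: fp_ge0].
Qed.

Lemma Ftot0E i : Ftot 0 i = Q 0 i j + \sum_(r < s | r != j) Q 0 i r * Ftot 0 r.
Proof.
rewrite /Ftot series_shift; last by move=> n; exact: F_ge0.
congr (_ + _); under eq_eseriesr => n _ do rewrite F0S.
by rewrite series_sumZ // => [r|n r]; [exact: Q_ge0|exact: F_ge0].
Qed.

Lemma Ftot1E i : Ftot 1 i = Q 1 i j +
   \sum_(r < s | r != j) (Q 1 i r * Ftot 0 r + Q 0 i r * Ftot 1 r).
Proof.
rewrite /Ftot series_shift; last by move=> n; exact: F_ge0.
congr (_ + _); under eq_eseriesr => n _ do rewrite F1S big_split /=.
rewrite nneseriesD; last 2 first.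
- by move=> n _ _; apply: sume_ge0 => r _; rewrite mule_ge0 // ?Q_ge0 ?F_ge0.
- by move=> n _ _; apply: sume_ge0 => r _; rewrite mule_ge0 // ?Q_ge0 ?F_ge0.
rewrite big_split /= !series_sumZ //; try (by move=> *; apply: Q_ge0); try (by move=> *; apply: F_ge0).
Qed.

Lemma Ftot2E i : Ftot 2 i = Q 2 i j +
   \sum_(r < s | r != j) (Q 2 i r * Ftot 0 r + (2%:E * Q 1 i r) * Ftot 1 r + Q 0 i r * Ftot 2 r).
Proof.
rewrite /Ftot series_shift; last by move=> n; exact: F_ge0.
congr (_ + _); under eq_eseriesr => n _ do rewrite F2S !big_split /=.
have h2 r : 0 <= 2%:E * Q 1 i r by rewrite mule_ge0 ?lee_fin ?Q_ge0.
rewrite nneseriesD3; last 3 first.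
- by move=> n; apply: sume_ge0 => r _; rewrite mule_ge0 // ?Q_ge0 ?F_ge0.
- by move=> n; apply: sume_ge0 => r _; rewrite mule_ge0 // ?Q_ge0 ?F_ge0.
- by move=> n; apply: sume_ge0 => r _; rewrite mule_ge0 // ?Q_ge0 ?F_ge0.
rewrite !big_split /= !series_sumZ //; try (by move=> *; apply: Q_ge0); try (by move=> *; apply: F_ge0).
Qed.

Lemma Fp0S N i : Fp 0 N.+1 i = Q 0 i j + \sum_(r < s | r != j) Q 0 i r * Fp 0 N r.
Proof.
rewrite /Fp big_nat_recl //; congr (_ + _); under eq_bigr => n _ do rewrite F0S.
by rewrite fsum_sumZ // => [r|n r]; [exact: Q_ge0|exact: F_ge0].
Qed.

Lemma Fp2S N i : Fp 2 N.+1 i = Q 2 i j +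
   \sum_(r < s | r != j) (Q 2 i r * Fp 0 N r + (2%:E * Q 1 i r) * Fp 1 N r + Q 0 i r * Fp 2 N r).
Proof.
rewrite /Fp big_nat_recl //; congr (_ + _); under eq_bigr => n _ do rewrite F2S !big_split /=.
have h2 r : 0 <= 2%:E * Q 1 i r by rewrite mule_ge0 ?lee_fin ?Q_ge0.
rewrite !big_split /= !fsum_sumZ //; try (by move=> *; apply: Q_ge0); try (by move=> *; apply: F_ge0).
Qed.

Lemma mom_retdist k i : mom k (retdist q u i j) = Ftot k i.
Proof.
rewrite /mom /retdist.
transitivity (\sum_(t <oo) \sum_(n <oo) ((((t ^ k)%N)%:R%:E : \bar R) * fp n i t)).
  apply: eq_eseriesr => t _; rewrite nneseriesZe ?wk_ge0 //.
  by move=> n; exact: fp_ge0.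
rewrite nneseries_interchange; last by move=> a b; apply: mule_ge0; [exact: wk_ge0|exact: fp_ge0].
by [].
Qed.

Lemma retfinE i : retfin q u i j = Ftot 0 i.
Proof. by rewrite -mom_retdist mom0E. Qed.

Lemma mu1E i : retfin q u i j = 1 -> mu1 q u i j = Ftot 1 i.
Proof.
move=> h; rewrite /mu1 h eqxx -mom_retdist; apply: eq_eseriesr => t _.
by rewrite expn1.
Qed.

Lemma mu2E i : retfin q u i j = 1 -> mu2 q u i j = Ftot 2 i.
Proof. by move=> h; rewrite /mu2 h eqxx -mom_retdist. Qed.
End chain.
Section esumZ_sec.
Context {R : realType}.
Lemma esumZ (T : choiceType) (S : set T) (a : T -> \bar R) (r : R) : (0 <= r)%R ->
  (forall x, 0 <= a x) -> \esum_(x in S) (r%:E * a x) = r%:E * \esum_(x in S) a x.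
Proof.
move=> r0 a0; rewrite /esum -ereal_supZl //; last first.
  apply/set0P; exists 0; exists set0; first exact: fsets_set0.
  by rewrite fsbig_set0.
congr ereal_sup; rewrite image_comp; apply: eq_imagel => A [finA _] /=.
by rewrite !fsbig_finite // ge0_sume_distrr.
Qed.
End esumZ_sec.

Lemma Q_esum {R : realType} {s d : nat} (q : 'I_s -> 'I_s -> time d -> R) (u : 'I_d)
  (hq0 : forall i r k, (0 <= q i r k)%R) k i r :
  Q q u k i r = \esum_(x in [set: time d]) (q i r x)%:E * ((((x u) ^ k)%N)%:R)%:E.
Proof.
have -> : [set: time d] = \bigcup_n [set x : time d | x u = n].
  by apply/seteqP; split => x // _; exists (x u).
rewrite nneseries_sum_bigcup; last 2 first.
- by move=> m n _ _ [x [/= hm hn]]; rewrite -hm -hn.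
- by move=> x; rewrite mule_ge0 // lee_fin.
rewrite /Q /mom; apply: eq_eseriesr => t _.
rewrite (eq_esum (b := fun x => ((t ^ k)%:R)%:E * (q i r x)%:E)); last first.
  by move=> x /= ->; rewrite muleC.
by rewrite esumZ // => x; rewrite lee_fin.
Qed.
Section aux2.
Context {R : realType}.
Lemma term_le_sum (I : finType) (P : pred I) (f : I -> \bar R) r :
  (forall x, 0 <= f x) -> P r -> f r <= \sum_(x | P x) f x.
Proof. by move=> f0 Pr; rewrite (bigD1 r) //= leeDl // sume_ge0. Qed.

Lemma sum_gt0_ex (I : finType) (P : pred I) (f : I -> \bar R) :
  0 < \sum_(x | P x) f x -> exists2 x, P x & 0 < f x.
Proof.
move=> h; case: (pselect (exists2 x, P x & 0 < f x)) => // nf.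
have : \sum_(x | P x) f x <= 0.
  apply: sume_le0 => x Px; rewrite leNgt; apply/negP => fx; apply: nf; by exists x.
by rewrite leNgt h.
Qed.

Lemma mul_gt0_inv (a b : \bar R) : 0 <= a -> 0 <= b -> 0 < a * b -> 0 < a /\ 0 < b.
Proof.
move=> a0 b0 h; split; rewrite lt0e ?a0 ?b0 andbT; apply/negP => /eqP e;
  by move: h; rewrite e ?mul0e ?mule0 ltxx.
Qed.
End aux2.
Arguments term_le_sum {R I} P {f} r.

Section markov.
Context {R : realType} {s d : nat} (q : 'I_s -> 'I_s -> time d -> R) (nu : 'I_s -> R).
Context (hk : is_kernel q) (hirr : irreducible q) (herg : ergodic q) (hst : stationary q nu).

Local Notation p := (ptrans q).

Lemma q_ge0 i r k : (0 <= q i r k)%R.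
Proof. exact: hk.1. Qed.

Lemma p_ge0 i r : 0 <= p i r.
Proof. by apply: esum_ge0 => k _; rewrite lee_fin q_ge0. Qed.

Lemma psum1 i : \sum_(r < s) p i r = 1.
Proof. exact: hk.2.2. Qed.

Lemma p_le1 i r : p i r <= 1.
Proof. by rewrite -(psum1 i); apply: term_le_sum => // x; exact: p_ge0. Qed.

Lemma p_fin i r : p i r \is a fin_num.
Proof. by rewrite ge0_fin_numE ?p_ge0 // (le_lt_trans (p_le1 i r)) // ltey. Qed.

Lemma pn_ge0 n i r : 0 <= pn q n i r.
Proof.
elim: n i => [|n IH] i /=; first by rewrite lee_fin ler0n.
by apply: sume_ge0 => k _; rewrite mule_ge0 ?p_ge0.
Qed.

Lemma propagate (j : 'I_s) (S : pred 'I_s) : S j ->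
  (forall i r, S i -> r != j -> 0 < p i r -> S r) -> forall r, S r.
Proof.
move=> Sj cl r; have [n hn] := hirr j r.
suff H : forall n i, S i -> 0 < pn q n i r -> S r by exact: (H n j).
elim=> [|m IH] i Si /=.
  by case: eqP => [<-//|_]; rewrite ltxx.
move=> /sum_gt0_ex[k _ /mul_gt0_inv[]]; rewrite ?p_ge0 ?pn_ge0 // => pik pk.
have [kj|kj] := eqVneq k j; first by apply: (IH j) => //; rewrite -kj.
by apply: (IH k) => //; exact: (cl i).
Qed.

Lemma nu_pn n r : \sum_(i < s) (nu i)%:E * pn q n i r = (nu r)%:E.
Proof.
elim: n r => [|n IH] r /=.
  rewrite (bigD1 r) //= eqxx mule1 big1 ?adde0 // => i /negbTE ->; by rewrite mule0.
have E i : (nu i)%:E * (\sum_(k < s) p i k * pn q n k r) =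
    \sum_(k < s) (nu i)%:E * (p i k * pn q n k r).
  by rewrite ge0_sume_distrr // => k _; rewrite mule_ge0 ?p_ge0 ?pn_ge0.
under eq_bigr => i _ do rewrite E.
rewrite exchange_big /= -IH; apply: eq_bigr => k _.
under eq_bigr => i _ do rewrite muleA.
rewrite -ge0_sume_distrl; last by move=> i _; rewrite mule_ge0 ?p_ge0 // lee_fin hst.1.
by rewrite hst.2.2.
Qed.

Lemma nu_gt0 r : (0 < nu r)%R.
Proof.
have [k _ nuk] : exists2 k, true & (0 < nu k)%R.
  case: (pselect (exists2 k, true & (0 < nu k)%R)) => // nk.
  have : (\sum_(i < s) nu i <= 0)%R.
    apply: sumr_le0 => i _; rewrite leNgt; apply/negP => h; apply: nk; by exists i.
  by rewrite hst.2.1 ler10.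
have [n hn] := hirr k r.
rewrite -lte_fin -(nu_pn n r).
have h0 : forall x, 0 <= (nu x)%:E * pn q n x r.
  by move=> x; rewrite mule_ge0 ?pn_ge0 // lee_fin hst.1.
have := term_le_sum xpredT k h0 isT.
by apply: lt_le_trans; rewrite mule_gt0 // lte_fin.
Qed.

Context (u : 'I_d) (j : 'I_s).
Local Notation H := (Ftot q u j 0).
Local Notation M1 := (Ftot q u j 1).
Local Notation M2 := (Ftot q u j 2).
Local Notation Fge0 := (F_ge0 q u j q_ge0).
Local Notation Ftotge0 := (Ftot_ge0 q u j q_ge0).
Local Notation Fpge0 := (Fp_ge0 q u j q_ge0).
Local Notation Qge0 := (Q_ge0 q u q_ge0).

Lemma Q0p i r : Q q u 0 i r = p i r.
Proof.
rewrite Q_esum; last exact: q_ge0.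
by apply: eq_esum => k _; rewrite expn0 mule1.
Qed.

Lemma Fp0_le1 N i : Fp q u j 0 N i <= 1.
Proof.
elim: N i => [|N IH] i; first by rewrite /Fp big_geq // lee01.
rewrite Fp0S; last exact: q_ge0.
rewrite Q0p -(psum1 i) [X in _ <= X](bigD1 j) //=; apply: leeD2l; apply: lee_sum => r _.
by rewrite Q0p -[X in _ <= X]mule1; apply: lee_wpmul2l; [exact: p_ge0|exact: IH].
Qed.

Lemma H_le1 i : H i <= 1.
Proof.
apply: series_le_bound; first by move=> n; exact: Fge0.
by move=> N; exact: Fp0_le1.
Qed.

Lemma H_fin i : H i \is a fin_num.
Proof. by rewrite ge0_fin_numE ?Ftotge0 // (le_lt_trans (H_le1 i)) // ltey. Qed.

Lemma Hj : H j = 1.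
Proof. by rewrite -(retfinE q u j q_ge0); exact: (herg u j).1. Qed.

Lemma H1 i : H i = 1.
Proof.
have S := @propagate j (fun i => H i == 1).
apply/eqP; apply: S; first by rewrite Hj.
move=> {}i r /eqP Hi rj pir.
pose h x := fine (H x); pose pr x y := fine (p x y).
have Ef x : H x = (h x)%:E by rewrite fineK // H_fin.
have Ep x y : p x y = (pr x y)%:E by rewrite fineK // p_fin.
have e1 : (1 = pr i j + \sum_(r' < s | r' != j) pr i r' * h r')%R.
  have := Ftot0E q u j q_ge0 i; rewrite Hi Q0p.
  under eq_bigr => r' _ do rewrite Q0p (Ep i r') (Ef r') -EFinM.
  by rewrite sumEFin Ep -EFinD => -[].
have e2 : (1 = pr i j + \sum_(r' < s | r' != j) pr i r')%R.
  have := psum1 i; rewrite (bigD1 j) //=.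
  under eq_bigr => r' _ do rewrite (Ep i r').
  by rewrite sumEFin Ep -EFinD => -[].
have e3 : (\sum_(r' < s | r' != j) pr i r' * (1 - h r') = 0)%R.
  under eq_bigr => r' _ do rewrite mulrBr mulr1.
  rewrite sumrB; lra.
have ge0 r' : (0 <= pr i r' * (1 - h r'))%R.
  rewrite mulr_ge0 // ?fine_ge0 ?p_ge0 // subr_ge0.
  by have := H_le1 r'; rewrite Ef lee_fin.
have := psumr_eq0P (fun r' _ => ge0 r') e3 rj.
move/eqP; rewrite mulf_eq0 => /orP[/eqP pr0|].
  by move: pir; rewrite Ep pr0 ltxx.
by rewrite subr_eq0 => /eqP h1; rewrite Ef -h1.
Qed.
Lemma retfin1 i : retfin q u i j = 1.
Proof. by rewrite (retfinE q u j q_ge0) H1. Qed.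

Lemma M1_ge_term i r : r != j -> p i r * M1 r <= M1 i.
Proof.
move=> rj; rewrite (Ftot1E q u j q_ge0 i) -Q0p.
apply: le_trans (leeDr _ (Qge0 _ _ _)).
have h0 x : 0 <= Q q u 1 i x * H x + Q q u 0 i x * M1 x.
  by rewrite adde_ge0 // mule_ge0 ?Qge0 ?Ftotge0.
apply: le_trans (term_le_sum (fun x => x != j) r h0 rj).
by rewrite leeDr // mule_ge0 ?Qge0 ?Ftotge0.
Qed.

Lemma M1_fin r : M1 r < +oo.
Proof.
have S := @propagate j (fun i => M1 i < +oo).
apply: S.
  by rewrite -(mu1E q u j q_ge0 j (retfin1 j)); exact: (herg u j).2.1.
move=> i {}r Mi rj pir; rewrite ltey; apply/negP => /eqP Mr.
have := M1_ge_term i r rj; rewrite Mr gt0_muley //.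
by rewrite leye_eq => /eqP Mi'; move: Mi; rewrite Mi' ltxx.
Qed.

Lemma M1_finE r : M1 r \is a fin_num.
Proof. by rewrite ge0_fin_numE ?Ftotge0 ?M1_fin. Qed.

Lemma Q1_pm1 i r : Q q u 1 i r = p i r * m1 q u i r.
Proof.
rewrite /m1; case: ifP => [/eqP p0|/negbT pn0].
  rewrite mule0 (Q_esum q u q_ge0); apply: esum1 => k _.
  suff -> : q i r k = 0%R by rewrite mul0e.
  have : (q i r k)%:E <= p i r.
    apply: esum_ge; exists [set k]; first by split; [exact: finite_set1|].
    by rewrite fsbig_set1.
  by rewrite p0 lee_fin => qk; apply/eqP; rewrite eq_le qk q_ge0.
rewrite (Q_esum q u q_ge0).
under eq_esum => k _ do rewrite expn1.
have pf := p_fin i r.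
rewrite -[in RHS](fineK pf) muleCA -EFinM mulfV ?mule1 //.
by apply: contra pn0 => /eqP f0; rewrite -(fineK pf) f0.
Qed.

Lemma M2_ge_term i r : r != j -> p i r * M2 r <= M2 i.
Proof.
move=> rj; rewrite (Ftot2E q u j q_ge0 i) -Q0p.
apply: le_trans (leeDr _ (Qge0 _ _ _)).
have h0 x : 0 <= Q q u 2 i x * H x + (2%:E * Q q u 1 i x) * M1 x + Q q u 0 i x * M2 x.
  by rewrite !adde_ge0 // !mule_ge0 ?Qge0 ?Ftotge0 ?lee_fin.
apply: le_trans (term_le_sum (fun x => x != j) r h0 rj).
by rewrite leeDr // adde_ge0 // !mule_ge0 ?Qge0 ?Ftotge0 ?lee_fin.
Qed.

Definition bb i := Q q u 2 i j + \sum_(r < s | r != j) (Q q u 2 i r + 2%:E * Q q u 1 i r * M1 r).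

Lemma bb_ge0 i : 0 <= bb i.
Proof.
by rewrite adde_ge0 ?Qge0 // sume_ge0 // => r _; rewrite adde_ge0 ?Qge0 // !mule_ge0 ?Qge0 ?Ftotge0 ?lee_fin.
Qed.

Lemma M2E i : M2 i = bb i + \sum_(r < s | r != j) p i r * M2 r.
Proof.
rewrite (Ftot2E q u j q_ge0 i) /bb -addeA; congr (_ + _).
rewrite -big_split /=; apply: eq_bigr => r _.
by rewrite H1 mule1 Q0p.
Qed.

Lemma M2p_le N i : Fp q u j 2 N.+1 i <= bb i + \sum_(r < s | r != j) p i r * Fp q u j 2 N r.
Proof.
rewrite (Fp2S q u j q_ge0) /bb -addeA; apply: leeD2l.
rewrite -big_split /=; apply: lee_sum => r _; rewrite Q0p.
apply: leeD2r; apply: leeD.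
- rewrite -[X in _ <= X]mule1; apply: lee_wpmul2l; first exact: Qge0.
  exact: Fp0_le1.
- apply: lee_wpmul2l; first by rewrite mule_ge0 ?lee_fin ?Qge0.
  by apply: partial_le_series => n; exact: Fge0.
Qed.
Lemma nuE_ge0 i : 0 <= (nu i)%:E.
Proof. by rewrite lee_fin hst.1. Qed.

Lemma stat_sum (g : 'I_s -> \bar R) : (forall r, 0 <= g r) ->
  \sum_(i < s) (nu i)%:E * (\sum_(r < s | r != j) p i r * g r) =
  \sum_(r < s | r != j) (nu r)%:E * g r.
Proof.
move=> g0.
have E i : (nu i)%:E * (\sum_(r < s | r != j) p i r * g r) =
    \sum_(r < s | r != j) (nu i)%:E * (p i r * g r).
  by rewrite ge0_sume_distrr // => r _; rewrite mule_ge0 ?p_ge0.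
under eq_bigr => i _ do rewrite E.
rewrite exchange_big /=; apply: eq_bigr => r _.
under eq_bigr => i _ do rewrite muleA.
rewrite -ge0_sume_distrl; last by move=> i _; rewrite mule_ge0 ?p_ge0 ?nuE_ge0.
by rewrite hst.2.2.
Qed.

Definition BB := \sum_(i < s) (nu i)%:E * bb i.

Lemma BB_ge0 : 0 <= BB.
Proof. by rewrite sume_ge0 // => i _; rewrite mule_ge0 ?nuE_ge0 ?bb_ge0. Qed.

Lemma key_sum (g : 'I_s -> \bar R) : (forall r, 0 <= g r) ->
  \sum_(i < s) (nu i)%:E * (bb i + \sum_(r < s | r != j) p i r * g r) =
  BB + \sum_(r < s | r != j) (nu r)%:E * g r.
Proof.
move=> g0; rewrite -stat_sum // /BB -big_split /=; apply: eq_bigr => i _.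
by rewrite ge0_muleDr ?bb_ge0 // sume_ge0 // => r _; rewrite mule_ge0 ?p_ge0.
Qed.

Lemma split_j (x : 'I_s -> \bar R) :
  \sum_(i < s) (nu i)%:E * x i = (nu j)%:E * x j + \sum_(r < s | r != j) (nu r)%:E * x r.
Proof. by rewrite (bigD1 j). Qed.

Lemma M2j_fin : BB < +oo -> M2 j < +oo.
Proof.
move=> hB.
have bfin i : bb i \is a fin_num.
  rewrite ge0_fin_numE ?bb_ge0 // ltey; apply/negP => /eqP bi.
  have h0 x : 0 <= (nu x)%:E * bb x by rewrite mule_ge0 ?nuE_ge0 ?bb_ge0.
  have := term_le_sum xpredT i h0 isT; rewrite -/BB bi gt0_muley ?lte_fin ?nu_gt0 //.
  by rewrite leye_eq => /eqP e; move: hB; rewrite e ltxx.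
have Fpfin N i : Fp q u j 2 N i \is a fin_num.
  elim: N i => [|N IH] i; first by rewrite /Fp big_geq.
  rewrite ge0_fin_numE ?Fpge0 //; apply: le_lt_trans (M2p_le N i) _.
  rewrite -ge0_fin_numE; last first.
    by rewrite adde_ge0 ?bb_ge0 // sume_ge0 // => r _; rewrite mule_ge0 ?p_ge0 ?Fpge0.
  rewrite fin_numD bfin /=; apply/sum_fin_numP => r _ _; rewrite fin_numM ?p_fin ?IH //.
have key N : (nu j)%:E * Fp q u j 2 N j <= BB.
  case: N => [|N]; first by rewrite /Fp big_geq // mule0 BB_ge0.
  have L : \sum_(i < s) (nu i)%:E * Fp q u j 2 N.+1 i <=
           BB + \sum_(r < s | r != j) (nu r)%:E * Fp q u j 2 N r.
    rewrite -key_sum; last by move=> r; exact: Fpge0.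
    by apply: lee_sum => i _; apply: lee_wpmul2l; [exact: nuE_ge0|exact: M2p_le].
  have L2 : \sum_(r < s | r != j) (nu r)%:E * Fp q u j 2 N r <=
            \sum_(r < s | r != j) (nu r)%:E * Fp q u j 2 N.+1 r.
    apply: lee_sum => r _; apply: lee_wpmul2l; first exact: nuE_ge0.
    by apply: partial_mono => n; exact: Fge0.
  move: (le_trans L (leeD2l BB L2)); rewrite split_j leeD2rE //.
  by apply/sum_fin_numP => r _ _; rewrite fin_numM.
have : M2 j <= ((nu j)^-1)%:E * BB.
  apply: series_le_bound => [n|N]; first exact: Fge0.
  by rewrite lee_pdivlMl ?nu_gt0 //; exact: key N.
move/le_lt_trans; apply; apply: lte_mul_pinfty => //.
by rewrite lee_fin invr_ge0 ltW ?nu_gt0.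
Qed.

Lemma M2_all_fin : M2 j < +oo -> forall r, M2 r < +oo.
Proof.
move=> hj; apply: (@propagate j (fun i => M2 i < +oo)) => // i r Mi rj pir.
rewrite ltey; apply/negP => /eqP Mr.
have := M2_ge_term i r rj; rewrite Mr gt0_muley //.
by rewrite leye_eq => /eqP Mi'; move: Mi; rewrite Mi' ltxx.
Qed.

Lemma M2_eq : \sum_(i < s) (nu i)%:E * M2 i = BB + \sum_(r < s | r != j) (nu r)%:E * M2 r.
Proof.
rewrite -key_sum; last by move=> r; exact: Ftotge0.
by apply: eq_bigr => i _; rewrite M2E.
Qed.

Lemma main_eq : M2 j = BB * ((nu j)^-1)%:E.
Proof.
have nj := nu_gt0 j.
have [Mf|Minf] := boolP (M2 j < +oo).
  have allf := M2_all_fin Mf.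
  have := M2_eq; rewrite split_j => e.
  have Xf : \sum_(r < s | r != j) (nu r)%:E * M2 r \is a fin_num.
    apply/sum_fin_numP => r _ _; rewrite fin_numM //.
    by rewrite ge0_fin_numE ?Ftotge0.
  have e' : (nu j)%:E * M2 j = BB.
    apply/eqP; rewrite eq_le -(leeD2rE _ _ Xf) e lexx /=.
    by rewrite -(leeD2rE _ _ Xf) -e lexx.
  by rewrite -e' muleAC -EFinM mulfV ?mul1e //; exact: lt0r_neq0.
have M2inf : M2 j = +oo by move: Minf; rewrite ltey negbK => /eqP.
have BBinf : BB = +oo.
  apply/eqP; rewrite -leye_eq leNgt; apply/negP => /M2j_fin; by rewrite M2inf ltxx.
by rewrite M2inf BBinf gt0_mulye // lte_fin invr_gt0.
Qed.
Lemma m2E i : m2 q u i = \sum_(r < s) Q q u 2 i r.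
Proof. by apply: eq_bigr => r _; rewrite (Q_esum q u q_ge0). Qed.

Lemma m1_ge0 i r : 0 <= m1 q u i r.
Proof.
rewrite /m1; case: ifP => // _; rewrite mule_ge0 //.
  by apply: esum_ge0 => k _; rewrite mule_ge0 // lee_fin ?q_ge0.
by rewrite lee_fin invr_ge0 fine_ge0 ?p_ge0.
Qed.

Lemma mu1_ge0 i r : 0 <= mu1 q u i r.
Proof.
rewrite /mu1; case: ifP => // _; apply: nneseries_ge0 => n _ _.
rewrite mule_ge0 // ?lee_fin //; apply: nneseries_ge0 => m _ _.
exact: (fp_ge0 q u r q_ge0).
Qed.

Lemma m2_ge0 i : 0 <= m2 q u i.
Proof. by rewrite m2E sume_ge0 // => r _; exact: Qge0. Qed.

Lemma bb_decomp i : bb i = \sum_(r < s) Q q u 2 i r +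
   2%:E * \sum_(r < s | r != j) Q q u 1 i r * M1 r.
Proof.
rewrite /bb big_split /= addeA [in RHS](bigD1 j) //=; congr (_ + _).
rewrite ge0_sume_distrr; last by move=> r _; rewrite mule_ge0 ?Qge0 ?Ftotge0.
by apply: eq_bigr => r _; rewrite muleA.
Qed.

Lemma BB_decomp : BB = \sum_(i < s) (nu i)%:E * m2 q u i +
   2%:E * \sum_(i < s) \sum_(r < s | r != j) (nu i)%:E * p i r * m1 q u i r * mu1 q u r j.
Proof.
rewrite /BB ge0_sume_distrr; last first.
  by move=> i _; apply: sume_ge0 => r _; rewrite !mule_ge0 ?nuE_ge0 ?p_ge0 ?m1_ge0 ?mu1_ge0.
rewrite -big_split /=; apply: eq_bigr => i _.
rewrite bb_decomp m2E ge0_muleDr; last 2 first.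
- by rewrite sume_ge0 // => r _; exact: Qge0.
- by rewrite mule_ge0 ?lee_fin // sume_ge0 // => r _; rewrite mule_ge0 ?Qge0 ?Ftotge0.
congr (_ + _); rewrite muleCA; congr (_ * _).
rewrite ge0_sume_distrr; last by move=> r _; rewrite mule_ge0 ?Qge0 ?Ftotge0.
apply: eq_bigr => r _.
by rewrite Q1_pm1 (mu1E q u j q_ge0 r (retfin1 r)) !muleA.
Qed.

Lemma final : mu2 q u j j =
      (\sum_(i < s) (nu i)%:E * m2 q u i) * ((nu j)^-1)%:E
      + 2%:E * ((\sum_(i < s) \sum_(r < s | r != j)
                  (nu i)%:E * ptrans q i r * m1 q u i r * mu1 q u r j)
                * ((nu j)^-1)%:E).
Proof.
rewrite (mu2E q u j q_ge0 j (retfin1 j)) main_eq BB_decomp ge0_muleDl; last 2 first.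
- by rewrite sume_ge0 // => i _; rewrite mule_ge0 ?nuE_ge0 ?m2_ge0.
- rewrite mule_ge0 ?lee_fin // sume_ge0 // => i _; apply: sume_ge0 => r _.
  by rewrite !mule_ge0 ?nuE_ge0 ?p_ge0 ?m1_ge0 ?mu1_ge0.
by rewrite muleA.
Qed.
End markov.

Theorem corollary5 (R : realType) (s d : nat) (q : 'I_s -> 'I_s -> time d -> R)
  (nu : 'I_s -> R) :
  is_kernel q -> irreducible q -> ergodic q -> stationary q nu ->
  forall (j : 'I_s) (u : 'I_d),
    mu2 q u j j =
      (\sum_(i < s) (nu i)%:E * m2 q u i) * ((nu j)^-1)%:E
      + 2%:E * ((\sum_(i < s) \sum_(r < s | r != j)
                  (nu i)%:E * ptrans q i r * m1 q u i r * mu1 q u r j)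
                * ((nu j)^-1)%:E).
Proof.
move=> hk hirr herg hst j u.
exact: (final q nu hk hirr herg hst u j).
Qed.
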